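(* Let $K\in\mathbb{R}^{n\times n}$ be diagonalizable with spectrum $\sigma(K)\subset(-\infty,0)$. Let $\mathcal{A}=I_m\otimes I_n-(I^{(-1)}D)\otimes K$ and $\mathcal{P}=I_m\otimes I_n-(SD)\otimes K$. Then $\mathcal{P}$ is nonsingular, $\mathcal{P}^{-1}\mathcal{A}$ has the eigenvalue $1$ with algebraic multiplicity at least $n(m-1)$ (at most $n$ eigenvalues, counted with multiplicity, differ from $1$), and $\sigma(\mathcal{P}^{-1}\mathcal{A})\subset[1,\infty)$.
   Context: $M\ge1$, $m=2M+1$, $h>0$, $T>0$. Sinc time points $t_j=\dfrac{T e^{jh}}{1+e^{jh}}$, $j=-M,\dots,M$. $D=h\,\mathrm{diag}\big(t_{-M}(T-t_{-M})/T,\dots,t_M(T-t_M)/T\big)$. $I^{(-1)}\in\mathbb{R}^{m\times m}$ is the Toeplitz matrix with entries $I^{(-1)}_{l,j}=\frac12+\int_0^{l-j}\frac{\sin(\pi t)}{\pi t}\,dt$. $S:=\frac12\big(I^{(-1)}-(I^{(-1)})^{\mathsf T}\big)$ (equivalently $S=I^{(-1)}-\frac12 e_me_m^{\mathsf T}$ with $e_m$ the all-ones vector). $\otimes$ is the Kronecker product and $I_p$ the $p\times p$ identity. *)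

(* Defs.v *)
From HB Require Import structures.
From mathcomp Require Import all_boot all_order all_algebra.
From mathcomp Require Import all_classical all_reals.
From mathcomp Require Import topology normedtype sequences exp trigo measure
  lebesgue_measure lebesgue_integral.
From mathcomp Require Import complex mxtens.
Set Implicit Arguments. Unset Strict Implicit. Unset Printing Implicit Defensive.
Import Order.TTheory GRing.Theory Num.Theory.
Local Open Scope ring_scope.

(* sin(pi t)/(pi t) (value at t = 0 irrelevant for the integral). *)
Definition sincpi {R : realType} (t : R) : R := sin (pi * t) / (pi * t).

Definition Si {R : realType} (x : R) : R :=
  if 0 <= x then (\int[lebesgue_measure]_(t in `[0, x]%classic) sincpi t)%R
  else (- \int[lebesgue_measure]_(t in `[x, 0]%classic) sincpi t)%R.

Definition Im1 {R : realType} (m : nat) : 'M[R]_m :=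
  \matrix_(l < m, j < m) (2^-1 + Si ((l%:R : R) - (j%:R : R))).

Definition Smx {R : realType} (m : nat) : 'M[R]_m :=
  2^-1 *: (Im1 m - (Im1 m)^T).

Definition sinc_pt {R : realType} (M : nat) (h T : R) (i : 'I_(2 * M + 1)) : R :=
  let j : R := (i%:R - M%:R) in
  T * expR (j * h) / (1 + expR (j * h)).

Definition Dmx {R : realType} (M : nat) (h T : R) : 'M[R]_(2 * M + 1) :=
  h *: diag_mx (\row_(i < 2 * M + 1) (@sinc_pt R M h T i * (T - @sinc_pt R M h T i) / T)).

Definition spectrum {R : realType} {k : nat} (A : 'M[R]_k) : set R[i] :=
  [set z | root (map_poly (real_complex R) (char_poly A)) z].

(* Main.v *)
Require Import Defs.
From HB Require Import structures.
From mathcomp Require Import all_boot all_order all_algebra.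
From mathcomp Require Import all_classical all_reals.
From mathcomp Require Import topology normedtype sequences exp trigo measure
  lebesgue_measure lebesgue_integral.
From mathcomp Require Import complex mxtens.
From mathcomp Require Import derive realfun ftc measurable_realfun.
From mathcomp Require Import ring lra.
Import Order.TTheory GRing.Theory Num.Theory numFieldNormedType.Exports.
Local Open Scope ring_scope.
Section Ana.
Context {R : realType}.
Local Open Scope classical_set_scope.

Definition Gs (t : R) : R := if t == 0 then 1 else sincpi t.

Lemma sincpiN (t : R) : sincpi (- t) = sincpi t.
Proof. by rewrite /sincpi mulrN sinN invrN mulrNN. Qed.

Lemma GsN (t : R) : Gs (- t) = Gs t.
Proof. by rewrite /Gs oppr_eq0 sincpiN. Qed.

Lemma Gs_cvg0 : Gs @ (0:R)^' --> (1 : R).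
Proof.
have ds : differentiable (@sin R) 0 by apply/derivable1_diffP; exact: derivable_sin.
have hs : derivable (@sin R) 0 pi by exact: diff_derivable.
have hv : 'D_pi (@sin R) 0 = pi.
  rewrite deriveE //.
  have e : 'd (@sin R) 0 ((pi:R) *: (1:R)) = (pi:R) *: 'd (@sin R) 0 (1:R) by rewrite linearZ.
  move: e; rewrite -[(pi:R) *: (1:R)]/(pi * 1) mulr1 => ->.
  by rewrite -deriveE // derive_val cos0; exact: mulr1.
have hq := cvgP _ hs.
rewrite -[lim _]/('D_pi (@sin R) 0) hv in hq.
have -> : (1 : R) = pi^-1 * pi by rewrite mulVf // gt_eqF // pi_gt0.
apply: cvg_trans; last exact: (cvgM (cvg_cst (pi^-1 : R)) hq).
apply: near_eq_cvg; near=> t.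
have t0 : t != 0 by near: t; exact: nbhs_dnbhs_neq.
rewrite /Gs (negbTE t0) /sincpi /= sin0 subr0 addr0.
rewrite -[t *: pi]/(t * pi) -[t^-1 *: _]/(t^-1 * _) [t * pi]mulrC invfM.
by ring.
Unshelve. all: end_near. Qed.

Lemma sincpi_cont (t : R) : t != 0 -> {for t, continuous (@sincpi R)}.
Proof.
move=> t0; apply: continuousM.
  apply: continuous_comp; last exact: continuous_sin.
  by apply: cvgM; [exact: cvg_cst|exact: cvg_id].
apply: continuousV; first by rewrite mulf_neq0 // gt_eqF // pi_gt0.
by apply: cvgM; [exact: cvg_cst|exact: cvg_id].
Qed.

Lemma Gs_cont : continuous Gs.
Proof.
move=> t; have [->|t0] := eqVneq t 0.
  by apply/continuous_withinNx; rewrite {2}/Gs eqxx; exact: Gs_cvg0.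
have nt : \forall x \near t, x != 0.
  by apply: open_nbhs_nbhs; split => //; exact: open_neq.
have e : Gs t = sincpi t by rewrite /Gs (negbTE t0).
suff : Gs @ t --> sincpi t by rewrite -e.
apply: cvg_trans; last exact: (@sincpi_cont t t0).
apply: near_eq_cvg; near=> x.
by rewrite /Gs (negbTE (near nt x _)).
Unshelve. all: end_near. Qed.


Lemma int_sinc_Gs (a b : R) (ha : ~ (a < 0 < b)) :
  (\int[lebesgue_measure]_(t in `[a, b]) (sincpi t)%:E)%E =
  (\int[lebesgue_measure]_(t in `[a, b]) (Gs t)%:E)%E.
Proof.
have mG : measurable_fun setT Gs := continuous_measurable_fun Gs_cont.
have e t : a < t -> t < b -> Gs t = sincpi t.
  move=> h1 h2; rewrite /Gs; case: eqP => // t0; exfalso; apply: ha.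
  by rewrite -t0 h1 h2.
apply: eq_integral_itv_bounded => //.
- apply: eq_measurable_fun (measurable_funTS mG).
  by move=> t; rewrite inE /= in_itv /= => /andP[h1 h2]; rewrite e.
- exact: measurable_funTS.
- by move=> t; rewrite in_itv /= => /andP[h1 h2]; rewrite e.
Qed.

Lemma int_refl (x : R) : 0 <= x ->
  (\int[lebesgue_measure]_(t in `[- x, 0]) sincpi t)%R =
  (\int[lebesgue_measure]_(t in `[0, x]) sincpi t)%R.
Proof.
move=> x0; rewrite /Rintegral; congr fine.
rewrite int_sinc_Gs; last by rewrite ltxx andbF.
rewrite int_sinc_Gs; last by rewrite ltxx.
rewrite -{1}oppr0 integration_by_substitution_oppr //.
  by apply: eq_integral => t _ /=; rewrite GsN.
exact: continuous_subspaceT Gs_cont.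
Qed.


Lemma SiN (x : R) : Si (- x) = - Si x.
Proof.
rewrite /Si oppr_ge0.
have [x0|x0|->] := ltgtP x 0.
- rewrite opprK -[in RHS](opprK x) int_refl //.
  by rewrite oppr_ge0 ltW.
- by rewrite int_refl // ltW.
- rewrite oppr0 set_itv1.
  rewrite /Rintegral integral_set1 /=; by rewrite oppr0.
Qed.

End Ana.
Section Lin.
Variable F : fieldType.
Local Notation idx := (@mxtens_index _ _).
Local Notation unidx := (@mxtens_unindex _ _).

Lemma sum_tens (m n : nat) (G : 'I_(m * n) -> F) :
  \sum_(i < m * n) G i = \sum_(j < m) \sum_(c < n) G (idx (j, c)).
Proof.
rewrite pair_big /= (reindex idx) /=; last first.
  by exists unidx; [move=> x _; exact: mxtens_indexK|move=> x _; exact: mxtens_unindexK].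
by apply: eq_bigr => -[j c].
Qed.

Lemma idx_eq m n (j j' : 'I_m) (c c' : 'I_n) :
  (idx (j, c) == idx (j', c')) = (j == j') && (c == c').
Proof. by rewrite (can_eq (@mxtens_indexK m n)) xpair_eqE. Qed.

Lemma tens_matrixP m n p q (A B : 'M[F]_(m * n, p * q)) :
  (forall i c j d, A (idx (i, c)) (idx (j, d)) = B (idx (i, c)) (idx (j, d))) -> A = B.
Proof.
move=> H; apply/matrixP => x y.
by case: (mxtens_indexP x) => i c; case: (mxtens_indexP y) => j d.
Qed.

Lemma sum_delta (m : nat) (j : 'I_m) (G : 'I_m -> F) :
  \sum_(l < m) ((l == j)%:R * G l) = G j.
Proof.
rewrite (bigD1 j) //= eqxx mul1r big1 ?addr0 // => l /negbTE ->.
by rewrite mul0r.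
Qed.

Lemma sum_delta' (m : nat) (j : 'I_m) (G : 'I_m -> F) :
  \sum_(l < m) ((j == l)%:R * G l) = G j.
Proof. by under eq_bigr do rewrite eq_sym; exact: sum_delta. Qed.

Section EF.
Variables (m n : nat) (Q Qi K : 'M[F]_n) (d : 'rV[F]_n).
Hypothesis QQi : Q *m Qi = 1%:M.
Hypothesis QiQ : Qi *m Q = 1%:M.
Hypothesis KQi : K *m Qi = Qi *m diag_mx d.
Hypothesis QK : Q *m K = diag_mx d *m Q.

Definition Em (a : 'I_n) : 'M[F]_(m * n, m) :=
  \matrix_(i, j) (((unidx i).1 == j)%:R * Qi (unidx i).2 a).
Definition Fm (a : 'I_n) : 'M[F]_(m, m * n) :=
  \matrix_(j, i) (((unidx i).1 == j)%:R * Q a (unidx i).2).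

Lemma FmEm a b : Fm a *m Em b = ((a == b)%:R)%:M.
Proof.
apply/matrixP => j j'; rewrite !mxE sum_tens.
rewrite (eq_bigr (fun l => (l == j)%:R * ((l == j')%:R * \sum_c (Q a c * Qi c b)))).
  have e := congr1 (fun M : 'M_n => M a b) QQi; rewrite /= !mxE in e.
  rewrite sum_delta e.
  by rewrite eq_sym; case: (j' == j); case: (a == b); rewrite /= ?mulr1 ?mulr0 ?mul0r.
move=> l _; rewrite !mulr_sumr; apply: eq_bigr => c _.
by rewrite !mxE mxtens_indexK /=; ring.
Qed.

Lemma sum_EmFm : \sum_a (Em a *m Fm a) = 1%:M.
Proof.
apply: tens_matrixP => i c j e; rewrite summxE.
have E a : (Em a *m Fm a) (idx (i, c)) (idx (j, e)) = (i == j)%:R * (Qi c a * Q a e).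
  rewrite !mxE (eq_bigr (fun l => (i == l)%:R * ((j == l)%:R * (Qi c a * Q a e)))).
    by rewrite sum_delta' eq_sym.
  by move=> l _; rewrite !mxE !mxtens_indexK /=; ring.
under eq_bigr do rewrite E.
rewrite -mulr_sumr.
have e' := congr1 (fun M : 'M_n => M c e) QiQ; rewrite /= !mxE in e'.
by rewrite e' !mxE idx_eq; case: (i == j); case: (c == e); rewrite /= ?mulr1 ?mulr0.
Qed.

Lemma TEm (X : 'M[F]_m) a : (X *t K) *m Em a = d 0 a *: (Em a *m X).
Proof.
have e' c := congr1 (fun M : 'M_n => M c a) KQi.
apply/matrixP => x j; case: (mxtens_indexP x) => i c.
rewrite !mxE sum_tens.
rewrite (eq_bigr (fun l => (l == j)%:R * (X i l * \sum_e' (K c e' * Qi e' a)))).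
  rewrite sum_delta (eq_bigr (fun l => (i == l)%:R * (Qi c a * X l j))).
    rewrite sum_delta'.
    move: (e' c); rewrite /= !mxE => ->.
    rewrite (bigD1 a) //= big1 ?addr0; last first.
      by move=> b /negbTE ba; rewrite !mxE ba mulr0n mulr0.
    by rewrite !mxE eqxx /=; ring.
  by move=> l _; rewrite !mxE mxtens_indexK /=; ring.
move=> l _; rewrite mulr_sumr mulr_sumr; apply: eq_bigr => e _.
by rewrite tensmxE !mxE mxtens_indexK /=; ring.
Qed.

Lemma FmT (X : 'M[F]_m) a : Fm a *m (X *t K) = d 0 a *: (X *m Fm a).
Proof.
have e' c := congr1 (fun M : 'M_n => M a c) QK.
apply/matrixP => j y; case: (mxtens_indexP y) => i c.
rewrite !mxE sum_tens.
rewrite (eq_bigr (fun l => (l == j)%:R * (X l i * \sum_e (Q a e * K e c)))).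
  rewrite sum_delta (eq_bigr (fun l => (i == l)%:R * (X j l * Q a c))).
    rewrite sum_delta'.
    move: (e' c); rewrite /= !mxE => ->.
    rewrite (bigD1 a) //= big1 ?addr0; last first.
      by move=> b /negbTE ba; rewrite !mxE eq_sym ba mulr0n mul0r.
    by rewrite !mxE eqxx /=; ring.
  by move=> l _; rewrite !mxE mxtens_indexK /=; ring.
move=> l _; rewrite mulr_sumr mulr_sumr; apply: eq_bigr => e _.
by rewrite tensmxE !mxE mxtens_indexK /=; ring.
Qed.

Definition U0 : 'M[F]_(m * n, n) := \matrix_(i, b) (((unidx i).2 == b)%:R).
Definition W0 (cs : 'rV[F]_m) : 'M[F]_(n, m * n) :=
  \matrix_(b, i) (cs 0 (unidx i).1 * K b (unidx i).2).

Lemma U0W0 cs : U0 *m W0 cs = (\matrix_(i, j) cs 0 j) *t K.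
Proof.
apply: tens_matrixP => i c j e; rewrite tensmxE !mxE.
rewrite (eq_bigr (fun b => (c == b)%:R * (cs 0 j * K b e))).
  by rewrite sum_delta'.
by move=> b _; rewrite !mxE !mxtens_indexK.
Qed.

Lemma W0Em cs a : W0 cs *m Em a = d 0 a *: (col a Qi *m cs).
Proof.
have e' c := congr1 (fun M : 'M_n => M c a) KQi.
apply/matrixP => b j; rewrite !mxE sum_tens big_ord1 !mxE.
rewrite (eq_bigr (fun l => (l == j)%:R * (cs 0 l * \sum_c (K b c * Qi c a)))).
  rewrite sum_delta; move: (e' b); rewrite /= !mxE => ->.
  rewrite (bigD1 a) //= big1 ?addr0; last first.
    by move=> b' /negbTE ba; rewrite !mxE ba mulr0n mulr0.
  rewrite !mxE eqxx /= (_ : cs ord0 j = cs 0 j) //; ring.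
move=> l _; rewrite mulr_sumr mulr_sumr; apply: eq_bigr => c _.
by rewrite !mxE mxtens_indexK /=; ring.
Qed.

Lemma FmU0 a : Fm a *m U0 = const_mx 1 *m row a Q.
Proof.
apply/matrixP => j b; rewrite !mxE sum_tens big_ord1 !mxE mul1r.
rewrite (eq_bigr (fun l => (l == j)%:R * Q a b)).
  by rewrite sum_delta.
move=> l _; rewrite (eq_bigr (fun c => (l == j)%:R * ((c == b)%:R * Q a c))).
  by rewrite -mulr_sumr sum_delta.
by move=> c _; rewrite !mxE !mxtens_indexK /=; ring.
Qed.

Section P.
Variable Y : 'M[F]_m.
Definition Pt : 'M[F]_(m * n) := 1%:M - Y *t K.
Definition Pa a : 'M[F]_m := 1%:M - d 0 a *: Y.

Lemma PtEm a : Pt *m Em a = Em a *m Pa a.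
Proof. by rewrite /Pt /Pa mulmxBl mul1mx TEm mulmxBr mulmx1 scalemxAr. Qed.

Lemma FmPt a : Fm a *m Pt = Pa a *m Fm a.
Proof. by rewrite /Pt /Pa mulmxBr mulmx1 FmT mulmxBl mul1mx scalemxAl. Qed.

Hypothesis Pa_unit : forall a, Pa a \in unitmx.

Definition Zi := \sum_a (Em a *m invmx (Pa a) *m Fm a).

Lemma ZiPt : Zi *m Pt = 1%:M.
Proof.
rewrite /Zi mulmx_suml -sum_EmFm; apply: eq_bigr => a _.
by rewrite -mulmxA FmPt mulmxA mulmxKV.
Qed.

Lemma Pt_unit : Pt \in unitmx.
Proof. by case: (mulmx1_unit ZiPt). Qed.

Lemma invPt : invmx Pt = Zi.
Proof.
have PZ := mulmx1C ZiPt.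
by rewrite -[invmx Pt]mulmx1 -PZ mulmxA mulVmx ?Pt_unit // mul1mx.
Qed.

Lemma W0PU0 cs : W0 cs *m invmx Pt *m U0 =
  Qi *m diag_mx (\row_a (d 0 a * (cs *m invmx (Pa a) *m (const_mx 1 : 'cV_m)) 0 0)) *m Q.
Proof.
rewrite invPt /Zi mulmx_sumr mulmx_suml mul_mx_diag.
apply/matrixP => b c; rewrite summxE [RHS]mxE.
apply: eq_bigr => a _.
rewrite !mulmxA W0Em -!mulmxA FmU0.
have -> : (d 0 a *: (col a Qi *m cs)) *m (invmx (Pa a) *m (const_mx 1 *m row a Q))
   = d 0 a *: (col a Qi *m (cs *m invmx (Pa a) *m (const_mx 1 : 'cV_m)) *m row a Q)
   by rewrite -scalemxAl !mulmxA.
rewrite !mxE big_ord1 !mxE big_ord1 !mxE.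
rewrite (_ : (0 : 'I_1) = ord0) //.
ring.
Qed.
End P.

End EF.
End Lin.

Lemma sylvester (Rc : comRingType) (k p : nat) (y : Rc) (U : 'M[Rc]_(k,p)) (W : 'M[Rc]_(p,k)) :
  y ^+ p * \det (y%:M - U *m W) = y ^+ k * \det (y%:M - W *m U).
Proof.
have e1 : block_mx 1%:M 0 (-W) (y%:M) *m block_mx (y%:M) U W 1%:M
          = block_mx (y%:M) U 0 (y%:M - W *m U).
  rewrite mulmx_block !mul1mx !mul0mx !addr0 mulmx1 mulNmx mul_mx_scalar.
  by rewrite mul_scalar_mx addNr addrC mulNmx.
have e2 : block_mx 1%:M U 0 1%:M *m block_mx (y%:M - U *m W) 0 W 1%:M
          = block_mx (y%:M) U W 1%:M.
  rewrite mulmx_block !mul1mx !mul0mx !mulmx1 ?mulmx0 ?addr0 ?add0r.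
  by rewrite subrK.
have := congr1 determinant e1; rewrite det_mulmx det_lblock det_ublock.
rewrite -e2 det_mulmx det_ublock det_lblock !det1 !det_scalar !mul1r !mulr1.
by move=> <-; rewrite mulrC.
Qed.


Section Scalar.
Variables (R : realFieldType) (m : nat) (S : 'M[R]_m) (dd : 'rV[R]_m) (mu : R).
Hypothesis Sskew : S^T = - S.
Hypothesis dd_gt0 : forall j, 0 < dd 0 j.
Hypothesis mu_ge0 : 0 <= mu.
Let D := diag_mx dd.

Definition qf (x : 'rV[R]_m) (A : 'M[R]_m) : R := (x *m A *m x^T) 0 0.

Lemma qfE x A : qf x A = \sum_i \sum_j (x 0 i * A i j * x 0 j).
Proof.
rewrite /qf mxE exchange_big /=; apply: eq_bigr => j _.
by rewrite !mxE mulr_suml; apply: eq_bigr => i _.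
Qed.

Lemma qf_skew x : qf x S = 0.
Proof.
have Se i j : S i j = - S j i.
  by have := congr1 (fun M : 'M_m => M j i) Sskew; rewrite /= !mxE.
have e : qf x S = - qf x S.
  rewrite qfE [in LHS]exchange_big /= -sumrN; apply: eq_bigr => i _.
  rewrite -sumrN; apply: eq_bigr => j _.
  by rewrite [S j i]Se; ring.
have : qf x S + qf x S = 0 by rewrite {2}e subrr.
by move=> h; lra.
Qed.

Lemma qf_diag x : qf x D = \sum_j dd 0 j * x 0 j ^+ 2.
Proof.
rewrite qfE; apply: eq_bigr => i _.
rewrite (bigD1 i) //= big1 ?addr0; last first.
  by move=> j /negbTE ij; rewrite /D !mxE eq_sym ij mulr0n mulr0 mul0r.
by rewrite /D !mxE eqxx mulr1n; ring.
Qed.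

Lemma qf_diag_ge0 x : 0 <= qf x D.
Proof.
rewrite qf_diag; apply: sumr_ge0 => j _.
by rewrite mulr_ge0 ?sqr_ge0 // ltW.
Qed.

Lemma qf_diag_eq0 x : qf x D = 0 -> x = 0.
Proof.
rewrite qf_diag => /eqP; rewrite psumr_eq0 => [/allP h|j _]; last first.
  by rewrite mulr_ge0 ?sqr_ge0 // ltW.
apply/rowP => j; rewrite mxE.
have /h : j \in index_enum 'I_m by rewrite mem_index_enum.
by rewrite /= mulf_eq0 gt_eqF ?dd_gt0 //= expf_eq0 /= => /eqP.
Qed.

Lemma trD : D^T = D.
Proof. exact: tr_diag_mx. Qed.

Lemma key_id (v : 'rV[R]_m) :
  (v *m (1%:M - mu *: (D *m S))) *m (D *m v^T)
  = v *m D *m v^T - mu *: ((v *m D) *m S *m (v *m D)^T).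
Proof.
rewrite trmx_mul trD mulmxBr mulmx1 mulmxBl -!scalemxAr -!scalemxAl !mulmxA.
by [].
Qed.

Lemma Pa_unit_gen : (1%:M + mu *: (S *m D)) \in unitmx.
Proof.
rewrite unitmxE unitfE -det_tr; apply/negP => /det0P [v v0 hv].
have eT : (1%:M + mu *: (S *m D))^T = 1%:M - mu *: (D *m S).
  by rewrite linearD /= trmx1 linearZ /= trmx_mul trD Sskew mulmxN scalerN.
move: hv; rewrite eT => hv.
have := key_id v; rewrite hv mul0mx => /(congr1 (fun M : 'M_1 => M 0 0)) /=.
rewrite [X in _ = X]mxE [X in _ = _ + X]mxE [X in _ = _ + - X]mxE.
rewrite -/(qf v D) -/(qf (v *m D) S) qf_skew mulr0 oppr0 addr0 mxE.
by move=> /esym /qf_diag_eq0 v00; rewrite v00 eqxx in v0.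
Qed.

Lemma tau_ge0 :
  0 <= ((2^-1 *: ((const_mx 1 : 'rV_m) *m D)) *m invmx (1%:M + mu *: (S *m D))
          *m (const_mx 1 : 'cV_m)) 0 0.
Proof.
set Pa := 1%:M + mu *: (S *m D).
have Pu : Pa \in unitmx by exact: Pa_unit_gen.
have eT : Pa^T = 1%:M - mu *: (D *m S).
  by rewrite linearD /= trmx1 linearZ /= trmx_mul trD Sskew mulmxN scalerN.
set x := invmx Pa *m (const_mx 1 : 'cV_m).
have ePa : Pa *m x = const_mx 1 by rewrite /x mulmxA mulmxV // mul1mx.
have e1 : (const_mx 1 : 'rV_m) = x^T *m (1%:M - mu *: (D *m S)).
  by rewrite -eT -trmx_mul ePa trmx_const.
rewrite -mulmxA -/x -scalemxAl mxE e1.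
rewrite -[x in _ *m D *m x]trmxK -mulmxA key_id.
rewrite [X in _ * X]mxE [X in _ * (_ + X)]mxE [X in _ * (_ + - X)]mxE.
rewrite -/(qf (x^T) D) -/(qf (x^T *m D) S) qf_skew mulr0 oppr0 addr0.
by rewrite mulr_ge0 ?invr_ge0 ?ler0n ?qf_diag_ge0.
Qed.

End Scalar.

Lemma tensmxBl (F : comRingType) m n p q (X Y : 'M[F]_(m, n)) (Z : 'M[F]_(p, q)) :
  (X - Y) *t Z = X *t Z - Y *t Z.
Proof. by apply/matrixP => i j; rewrite !mxE mulrBl. Qed.

Lemma det_conj_diag (Rc : comRingType) n (Qi Q : 'M[Rc]_n) (e : 'rV[Rc]_n) (y : Rc) :
  Qi *m Q = 1%:M -> \det (y%:M - Qi *m diag_mx e *m Q) = \prod_a (y - e 0 a).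
Proof.
move=> QiQ.
have -> : y%:M - Qi *m diag_mx e *m Q = Qi *m diag_mx (\row_a (y - e 0 a)) *m Q.
  have -> : diag_mx (\row_a (y - e 0 a)) = y%:M - diag_mx e.
    by apply/matrixP => i j; rewrite !mxE mulrnBl.
  by rewrite mulmxBr mulmxBl mul_mx_scalar -scalemxAl QiQ scalemx1.
have := congr1 determinant QiQ; rewrite det_mulmx det1 => e1.
rewrite !det_mulmx det_diag mulrAC e1 mul1r.
by apply: eq_bigr => a _; rewrite mxE.
Qed.

Theorem theorem3p3 (R : realType) (M n : nat) (h T : R)
  (K : 'M[R]_n) :
  (1 <= M)%N -> 0 < h -> 0 < T ->
  diagonalizable K ->
  (forall z : R[i], z \in spectrum K -> exists x : R, x < 0 /\ z = (x%:C)%C) ->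
  let m := (2 * M + 1)%N in
  let A : 'M[R]_(m * n) := 1%:M - (Im1 m *m Dmx M h T) *t K in
  let P : 'M[R]_(m * n) := 1%:M - (Smx m *m Dmx M h T) *t K in
  [/\ P \in unitmx,
      (('X - 1%:P) ^+ (n * (m - 1)) %| char_poly (invmx P *m A))%R &
      (forall z : R[i], z \in spectrum (invmx P *m A) ->
          exists x : R, 1 <= x /\ z = (x%:C)%C)].
Proof.
move=> hM h0 T0 diagK specK m A P.
case: diagK => Q Qu /diagonalizable_forPex [d /(simmxRL Qu) Kd].
set Qi := invmx Q.
have QQi : Q *m Qi = 1%:M by rewrite mulmxV.
have QiQ : Qi *m Q = 1%:M by rewrite mulVmx.
have KQi : K *m Qi = Qi *m diag_mx d by rewrite Kd !mulmxA QiQ mul1mx.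
have QK : Q *m K = diag_mx d *m Q by rewrite Kd -!mulmxA QiQ mulmx1.
have dneg a : d 0 a < 0.
  have ev : eigenvalue K (d 0 a).
    apply/eigenvalueP; exists (row a Q).
      by rewrite -row_mul QK mul_diag_mx; apply/rowP => j; rewrite !mxE.
    apply/eqP => r0.
    have : row a (Q *m Qi) = 0 by rewrite row_mul r0 mul0mx.
    by rewrite QQi => /rowP /(_ a); rewrite !mxE eqxx /= => /eqP; rewrite oner_eq0.
  rewrite eigenvalue_root_char in ev.
  have : ((d 0 a)%:C)%C \in spectrum K.
    by rewrite inE /spectrum /= fmorph_root.
  by case/specK => x [x0 /complexI ->].
pose D := Dmx M h T.
set r := \row_(i < 2 * M + 1) (@sinc_pt R M h T i * (T - @sinc_pt R M h T i) / T).
have DE : D = diag_mx (h *: r) by apply/matrixP => i j; rewrite !mxE mulrnAr.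
have dd_gt0 j : 0 < (h *: r) 0 j.
  rewrite !mxE; apply: mulr_gt0 => //.
  rewrite /sinc_pt /=; set e := expR _.
  have e0 : 0 < e := expR_gt0 _.
  apply: divr_gt0 => //; apply: mulr_gt0.
    by apply: divr_gt0; [exact: mulr_gt0|rewrite addr_gt0].
  rewrite subr_gt0 ltr_pdivrMr ?addr_gt0 //; nra.
pose S : 'M[R]_m := Smx m.
have Sskew : S^T = - S.
  by rewrite /S /Smx linearZ /= linearB /= trmxK -scalerN opprB.
have ImS : Im1 m - S = 2^-1 *: const_mx 1.
  apply/matrixP => i j; rewrite !mxE -[(j%:R - i%:R)]opprB SiN.
  by field.
pose cs := 2^-1 *: ((const_mx 1 : 'rV_m) *m D).
have AE : A = P - U0 R m n *m W0 R m n K cs.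
  rewrite U0W0 /A /P.
  have -> : \matrix_(i, j) cs 0 j = (Im1 m - S) *m D.
    rewrite ImS; apply/matrixP => i j; rewrite !mxE mulr_sumr.
    by apply: eq_bigr => l _; rewrite !mxE; ring.
  by rewrite mulmxBl tensmxBl opprB addrA subrK.
have Pa_u a : Pa R m n d (S *m D) a \in unitmx.
  by rewrite /Pa -scaleNr DE; exact: Pa_unit_gen.
have PE : P = Pt R m n K (S *m D) by [].
have Pu : P \in unitmx by rewrite PE; exact: (@Pt_unit R m n Q Qi K d QiQ QK _ Pa_u).
pose U := invmx P *m U0 R m n.
have BE : invmx P *m A = 1%:M - U *m W0 R m n K cs.
  by rewrite AE mulmxBr mulVmx // mulmxA.
pose dl := \row_a (- (d 0 a * (cs *m invmx (Pa R m n d (S *m D) a) *m (const_mx 1 : 'cV_m)) 0 0)).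
have WU : W0 R m n K cs *m (- U) = Qi *m diag_mx dl *m Q.
  rewrite mulmxN /U mulmxA PE (@W0PU0 R m n Q Qi K d QiQ KQi QK _ Pa_u) -mulNmx -mulmxN.
  by congr (_ *m _ *m _); apply/matrixP => i j; rewrite !mxE mulNrn.
have dl_ge0 a : 0 <= dl 0 a.
  rewrite mxE -mulNr; apply: mulr_ge0; first by rewrite oppr_ge0 ltW.
  by rewrite /Pa -scaleNr /cs DE; exact: tau_ge0.
pose y : {poly R} := 'X - 1%:P.
have y0 : y != 0 by rewrite /y polyXsubC_eq0.
have CP : char_poly (invmx P *m A) = y ^+ (m * n - n) * \prod_a ('X - (1 + dl 0 a)%:P).
  rewrite BE /char_poly /char_poly_mx.
  have e1 : 'X%:M - map_mx polyC (1%:M - U *m W0 R m n K cs)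
      = y%:M - map_mx polyC (- U) *m map_mx polyC (W0 R m n K cs).
    rewrite map_mxB map_mx1 -map_mxM mulNmx map_mxN opprK opprB /y.
    by rewrite raddfB /= polyC1 addrA addrAC.
  rewrite e1.
  have syl := @sylvester _ _ _ y (map_mx polyC (- U)) (map_mx polyC (W0 R m n K cs)).
  rewrite -[map_mx _ (W0 R m n K cs) *m _]map_mxM WU !map_mxM map_diag_mx det_conj_diag in syl; last first.
    by rewrite -map_mxM QiQ map_mx1.
  have mn : (n <= m * n)%N by rewrite leq_pmull // /m addn1.
  have ee : y ^+ (m * n) = y ^+ (m * n - n) * y ^+ n by rewrite -exprD subnK.
  move: syl; rewrite ee [in LHS]mulrC mulrAC => /(mulIf (expf_neq0 n y0)) ->.
  congr (_ * _).
  by apply: eq_bigr => a _; rewrite mxE /y polyCD opprD addrA.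
split.
- exact: Pu.
- have -> : (n * (m - 1) = m * n - n)%N by rewrite mulnBr muln1 mulnC.
  by rewrite CP; apply: dvdp_mulr; exact: dvdpp.
- move=> z; rewrite inE /spectrum /= CP rmorphM rmorphXn rmorph_prod /=.
  rewrite /y map_polyXsubC rmorph1 rootM => /orP [].
    rewrite rootE horner_exp hornerXsubC expf_eq0 => /andP [_ /eqP /subr0_eq ->].
    by exists 1; split => //; rewrite rmorph1.
  rewrite rootE horner_prod => /prodf_eq0 [a _].
  rewrite map_polyXsubC hornerXsubC => /eqP /subr0_eq ->.
  by exists (1 + dl 0 a); split => //; rewrite lerDl.
Qed.
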